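(* Assume that the continuum $\mathfrak{c}$ is a regular cardinal. Let $X$ be a Polish space, let $\{Y_\alpha:\alpha<\mathfrak{c}\}$ be Polish spaces, and let $\{f_\alpha:\alpha<\mathfrak{c}\}$ be functions $f_\alpha: X\to Y_\alpha$ such that for every $\alpha<\mathfrak{c}$: (1) $f_\alpha[X]=Y_\alpha$; (2) for every $y\in Y_\alpha$, $|f_\alpha^{-1}[\{y\}]|<\mathfrak{c}$. Then there exists $A\subseteq X$ such that for every $\alpha<\mathfrak{c}$ the image $f_\alpha[A]$ is a Bernstein set in $Y_\alpha$.
   Context: A subset $S$ of a Polish space $Y$ is a Bernstein set in $Y$ if for every nonempty perfect set $P\subseteq Y$ we have $S\cap P\neq\emptyset$ and $(Y\setminus S)\cap P\neq\emptyset$. The functions $f_\alpha$ are arbitrary (no continuity is assumed). *)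

(* Defs.v *)
From HB Require Import structures.
From mathcomp Require Import all_boot all_order all_algebra.
From mathcomp Require Import all_classical all_reals all_analysis.
From mathcomp Require Import Rstruct Rstruct_topology.
From Stdlib Require Import Reals.

Set Implicit Arguments.
Unset Strict Implicit.
Unset Printing Implicit Defensive.

Import Order.TTheory GRing.Theory Num.Theory.
Local Open Scope classical_set_scope.
Local Open Scope ring_scope.

(* The continuum c is the cardinality of the real line [set: R]
   (R = Stdlib's real numbers, a realType via Rstruct). *)
Definition continuum : set R := [set: R].

Definition card_lt T U (A : set T) (B : set U) : Prop :=
  (A #<= B)%card /\ ~ (B #<= A)%card.

(* c is regular: c is not the union of fewer than c sets each of size
   less than c (equivalently, cf(c) = c). *)
Definition continuum_regular : Prop :=
  forall (J : Type) (F : J -> set R),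
    card_lt [set: J] continuum ->
    (forall j, card_lt (F j) continuum) ->
    card_lt (\bigcup_j F j) continuum.

Definition complete_compatible_metric (T : topologicalType) (d : T -> T -> R)
  : Prop :=
  [/\ (forall x y, 0 <= d x y) /\ (forall x y, d x y = 0 <-> x = y),
      (forall x y, d x y = d y x),
      (forall x y z, d x z <= d x y + d y z),
      (forall U : set T, open U <->
         (forall x, U x -> (exists2 e : R, 0 < e & [set y | d x y < e] `<=` U))) &
      (forall u : nat -> T,
         (forall e : R, 0 < e -> exists N : nat, forall m n : nat,
             leq N m -> leq N n -> d (u m) (u n) < e) ->
         exists l : T, u @ \oo --> l)].

Definition polish_space (T : topologicalType) : Prop :=
  (exists D : set T, countable D /\ dense D) /\
  (exists d : T -> T -> R, complete_compatible_metric d).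

Definition bernstein_set (Y : topologicalType) (S : set Y) : Prop :=
  forall P : set Y, perfect_set P -> P !=set0 ->
    (S `&` P !=set0) /\ (~` S `&` P !=set0).

(* Main.v *)
Require Import Defs.
From HB Require Import structures.
From mathcomp Require Import all_boot all_order all_algebra.
From mathcomp Require Import all_classical all_reals all_analysis.
From mathcomp Require Import Rstruct Rstruct_topology.
From Stdlib Require Import Reals.
From mathcomp Require Import wochoice.
From mathcomp Require Import lra.
Set Implicit Arguments.
Unset Strict Implicit.
Unset Printing Implicit Defensive.
Import Order.TTheory GRing.Theory Num.Theory.
Local Open Scope classical_set_scope.
Local Open Scope card_scope.

Definition small T (A : set T) := card_lt A continuum.

Lemma inj_le T U (A : set T) (B : set U) (f : T -> U) :
  {in A &, injective f} -> f @` A `<=` B -> A #<= B.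
Proof.
move=> fi sub; apply: (@card_le_trans _ _ _ (f @` A)); last exact: subset_card_le.
by have := inj_card_eq fi; rewrite card_eq_sym card_eq_le => /andP[].
Qed.

Lemma small_le T U (A : set T) (B : set U) : A #<= B -> small B -> small A.
Proof.
move=> AB [BR nRB]; split; first exact: card_le_trans AB BR.
by move=> RA; apply: nRB; exact: card_le_trans RA AB.
Qed.

Lemma small_image T U (A : set T) (f : T -> U) : small A -> small (f @` A).
Proof. by apply: small_le; exact: card_image_le. Qed.

Lemma small_inj_image T U (A : set T) (f : T -> U) : {in A &, injective f} ->
  small (f @` A) -> small A.
Proof. by move=> fi; apply: small_le; have := inj_card_eq fi; rewrite card_eq_sym card_eq_le => /andP[]. Qed.

Lemma notsmall T (A : set T) : [set: R] #<= A -> ~ small A.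
Proof. by move=> RA [_]; apply. Qed.

Lemma small_bigcup T (chi : T -> R) (J : Type) (F : J -> set T) :
  continuum_regular -> injective chi ->
  small [set: J] -> (forall j, small (F j)) -> small (\bigcup_j F j).
Proof.
move=> reg ci sJ sF.
have fi : {in \bigcup_j F j &, injective chi} by move=> x y _ _; apply: ci.
apply: (small_inj_image fi); rewrite image_bigcup.
apply: reg => // j; apply: small_image; exact: sF.
Qed.

Lemma small_sub T (A B : set T) : A `<=` B -> small B -> small A.
Proof. by move=> AB; apply: small_le; exact: subset_card_le. Qed.

Lemma good_order : exists lt : R -> R -> Prop,
  [/\ well_founded lt, (forall x y, lt x y \/ x = y \/ lt y x) &
      (forall x, small [set y | lt y x])].
Proof.
have [W Wwo] := well_ordering_principle R.
pose P2 (x y : R) : pred R := fun z => (z == x) || (z == y).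
have min2 x y : exists! z, minimum_of W (P2 x y) z.
  by apply: Wwo; exists x; rewrite unfold_in /P2 eqxx.
have Wtot x y : W x y \/ W y x.
  have [z [[zin zlb] _]] := min2 x y.
  move: zin; rewrite unfold_in /P2 => /orP[]/eqP ?; subst z.
    by left; apply: zlb; rewrite unfold_in /P2 eqxx orbT.
  by right; apply: zlb; rewrite unfold_in /P2 eqxx.
have Wanti x y : W x y -> W y x -> x = y.
  move=> xy yx; have [z [_ zu]] := min2 x y.
  have hx : minimum_of W (P2 x y) x.
    split; first by rewrite unfold_in /P2 eqxx.
    move=> w; rewrite unfold_in /P2 => /orP[]/eqP->//.
    by have [|] := Wtot x x.
  have hy : minimum_of W (P2 x y) y.
    split; first by rewrite unfold_in /P2 eqxx orbT.
    move=> w; rewrite unfold_in /P2 => /orP[]/eqP->//.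
    by have [|] := Wtot y y.
  by rewrite -(zu _ hx) -(zu _ hy).
pose lt0 x y := W x y /\ x <> y.
have wf0 : well_founded lt0.
  move=> x; apply: contrapT => nAx.
  pose A : pred R := fun z => `[< ~ Acc lt0 z >].
  have [z [[zin zlb] _]] : exists! z, minimum_of W A z.
    by apply: Wwo; exists x; rewrite unfold_in /A; apply/asboolP.
  move: zin; rewrite unfold_in /A => /asboolP; apply; constructor => y [yz ney].
  apply: contrapT => nAy; apply: ney; apply: Wanti yz _.
  by apply: zlb; rewrite unfold_in /A; apply/asboolP.
have tot0 x y : lt0 x y \/ x = y \/ lt0 y x.
  have [->|ne] := pselect (x = y); first by right; left.
  by have [h|h] := Wtot x y; [left|right; right]; split=> // /esym.
have [allsmall|] := pselect (forall x, small [set y | lt0 y x]).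
  by exists lt0.
move=> /existsNP[x1 nsx1].
pose A : pred R := fun z => `[< ~ small [set y | lt0 y z] >].
have [x0 [[x0in x0lb] _]] : exists! z, minimum_of W A z.
  by apply: Wwo; exists x1; rewrite unfold_in /A; apply/asboolP.
move: x0in; rewrite unfold_in /A => /asboolP nsx0.
have RS : [set: R] #<= [set y | lt0 y x0].
  apply: contrapT => nRS; apply: nsx0; split=> //; exact: card_leT.
have [h] := pcard_leP RS.
have hin x : lt0 (h x) x0 by exact: (@funS _ _ _ _ h x I).
have hinj : injective h by move=> x y; apply: (@inj _ _ _ h); exact: mem_set.
exists (fun x y => lt0 (h x) (h y)); split.
- have H z : Acc lt0 z -> forall x, h x = z -> Acc (fun a b => lt0 (h a) (h b)) x.
    elim=> z' _ IH x hz; constructor => y hy; apply: (IH (h y)) => //; by rewrite -hz.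
  by move=> x; apply: (H (h x)).
- move=> x y; have [|[/hinj|]] := tot0 (h x) (h y); by auto.
- move=> x; have sm : small [set y | lt0 y (h x)].
    apply: contrapT => ns; have [Wh nh] := hin x.
    apply: nh; apply: Wanti Wh _; apply: x0lb; rewrite unfold_in /A; exact/asboolP.
  apply: small_inj_image (fun a b _ _ => @hinj a b) _.
  apply: small_sub sm => _ [y hy <-]; exact: hy.
Qed.

Local Close Scope card_scope.
Local Open Scope ring_scope.

Definition tt3 : R := 3^-1.

Fixpoint Sb (b : nat -> bool) (N : nat) : R :=
  match N with 0%N => 0 | N'.+1 => Sb b N' + (if b N' then 2 * tt3 ^+ N'.+1 else 0) end.

Lemma SbS b n : Sb b n.+1 = Sb b n + (if b n then 2 * tt3 ^+ n.+1 else 0).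
Proof. by []. Qed.

Lemma tt3_pos : 0 < tt3.
Proof. by rewrite /tt3 invr_gt0. Qed.

Lemma tt3S n : tt3 ^+ n.+1 * 3 = tt3 ^+ n.
Proof. by rewrite exprSr -mulrA /tt3 mulVf ?mulr1 // pnatr_eq0. Qed.

Lemma Sb_mon b n k : Sb b n <= Sb b (n + k).
Proof.
elim: k => [|k IH]; first by rewrite addn0.
rewrite addnS SbS; apply: (le_trans IH); rewrite lerDl.
case: (b _) => //; apply: mulr_ge0 => //; apply: exprn_ge0; exact: ltW tt3_pos.
Qed.

Lemma Sb_tail b m k : Sb b (m + k) <= Sb b m + tt3 ^+ m - tt3 ^+ (m + k).
Proof.
elim: k => [|k IH]; first by rewrite addn0 addrK.
rewrite addnS SbS; have e := tt3S (m + k).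
have p : 0 <= tt3 ^+ (m + k).+1 by apply: exprn_ge0; exact: ltW tt3_pos.
case: (b _); lra.
Qed.

Lemma Sb_prefix (b b' : nat -> bool) (m : nat) : (forall n : nat, ltn n m -> b n = b' n) -> Sb b m = Sb b' m.
Proof.
elim: m => [//|m IH] h; rewrite !SbS IH; last by move=> n nm; apply: h; exact: ltnW.
by rewrite (h m (ltnSn m)).
Qed.

Definition enc (b : nat -> bool) : R := sup (range (Sb b)).

Lemma Sb_ub b : has_ubound (range (Sb b)).
Proof.
exists 1 => _ [N _ <-]; have := Sb_tail b 0 N; rewrite add0n expr0.
have : 0 <= tt3 ^+ N by apply: exprn_ge0; exact: ltW tt3_pos.
have -> : Sb b 0 = 0 by []. lra.
Qed.

Lemma enc_lt (b b' : nat -> bool) (m : nat) : b m = false -> b' m = true ->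
  (forall n : nat, ltn n m -> b n = b' n) -> enc b < enc b'.
Proof.
move=> bm bm' pre.
have h1 : enc b <= Sb b m + tt3 ^+ m.+1.
  apply: ge_sup; first by exists (Sb b 0), 0%N.
  move=> _ [N _ <-]; have [Nm|mN] := leqP N m.
    have := Sb_mon b N (m - N); rewrite subnKC //.
    have : 0 <= tt3 ^+ m.+1 by apply: exprn_ge0; exact: ltW tt3_pos.
    lra.
  have := Sb_tail b m.+1 (N - m.+1); rewrite subnKC // SbS bm.
  have : 0 <= tt3 ^+ N by apply: exprn_ge0; exact: ltW tt3_pos.
  lra.
have h2 : Sb b' m.+1 <= enc b'.
  by apply: ub_le_sup; [exact: Sb_ub | exists m.+1].
move: h2; rewrite SbS bm' -(Sb_prefix pre).
have : 0 < tt3 ^+ m.+1 by apply: exprn_gt0; exact: tt3_pos.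
lra.
Qed.

Lemma enc_inj : injective enc.
Proof.
move=> b b' e; apply/funext => n; apply: contrapT => ne.
have ex : exists n, b n != b' n by exists n; apply/eqP.
case: (ex_minnP ex) => m bm mmin.
have pre : forall k, ltn k m -> b k = b' k.
  move=> k km; apply/eqP; apply: contraTT km => /mmin; by rewrite leqNgt.
move: bm; case eb : (b m); case eb' : (b' m) => // _.
- by have := enc_lt eb' eb (fun k h => esym (pre k h)); rewrite e ltxx.
- by have := enc_lt eb eb' pre; rewrite e ltxx.
Qed.

Definition dec (x : R) (n : nat) : bool :=
  match @unpickle rat n with Some q => ratr q < x | None => false end.

Lemma dec_inj : injective dec.
Proof.
suff H : forall x y : R, x < y -> dec x <> dec y.
  move=> x y e; have [xy|yx|//] := ltgtP x y; [by case: (H _ _ xy e)|by case: (H _ _ yx (esym e))].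
move=> x y xy e; have [q] := rat_in_itvoo xy; rewrite in_itv /= => /andP[xq qy].
have := congr1 (fun f => f (pickle q)) e; rewrite /dec pickleK qy ltNge (ltW xq).
by [].
Qed.
Local Open Scope ring_scope.

Lemma archA (e : R) : 0 < e -> exists N : nat, 1 < N.+1%:R * e.
Proof.
move=> e0; have ie : 0 <= e^-1 by rewrite invr_ge0 ltW.
have h := archi_boundP ie; exists (Num.Def.archi_bound e^-1).
set K := (Num.Def.archi_bound e^-1)%:R in h *.
have -> : (Num.Def.archi_bound e^-1).+1%:R = K + 1 :> R by rewrite /K -natr1.
have ee : e^-1 * e = 1 by rewrite mulVf // gt_eqF.
nra.
Qed.

Lemma archB (e : R) : 0 < e -> exists N : nat, (N.+1%:R)^-1 < e.
Proof.
move=> /archA[N h]; exists N.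
have K0 : 0 < N.+1%:R :> R by rewrite ltr0n.
set K := N.+1%:R in h K0 *.
have kk : K^-1 * K = 1 by rewrite mulVf // gt_eqF.
have ki : 0 < K^-1 by rewrite invr_gt0.
have : K^-1 * 1 < K^-1 * (K * e) by rewrite ltr_pM2l.
by rewrite mulr1 mulrA kk mul1r.
Qed.

Lemma ball_open (T : topologicalType) (d : T -> T -> R) :
  complete_compatible_metric d -> forall x e, open [set y | d x y < e].
Proof.
move=> [[d0 dxx] dsym dtri dopen dcomp] x e; apply/dopen => y hy.
exists (e - d x y); first by rewrite subr_gt0.
move=> z /= hz; have := dtri x y z; lra.
Qed.

Lemma dnbhs_ball (T : topologicalType) (d : T -> T -> R) :
  complete_compatible_metric d -> forall (x : T) e, 0 < e -> nbhs x [set y | d x y < e].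
Proof.
move=> hd x e e0; apply: open_nbhs_nbhs; split; first exact: ball_open.
by case: hd => [[_ dxx] _ _ _ _] /=; rewrite (dxx x x).2.
Qed.

Lemma dnbhs_ballP (T : topologicalType) (d : T -> T -> R) :
  complete_compatible_metric d -> forall (x : T) U, nbhs x U ->
  exists2 e, 0 < e & [set y | d x y < e] `<=` U.
Proof.
move=> [_ _ _ dopen _] x U; rewrite nbhsE => -[V [oV Vx] VU].
have [e e0 h] := (dopen V).1 oV x Vx; exists e => //; exact: subset_trans VU.
Qed.

Lemma cvg_ball (T : topologicalType) (d : T -> T -> R) :
  complete_compatible_metric d -> forall (u : nat -> T) (l : T), u @ \oo --> l ->
  forall e, 0 < e -> exists N, forall n, leq N n -> d l (u n) < e.
Proof.
move=> hd u l ul e e0; have := ul _ (dnbhs_ball hd l e0).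
by move=> [N _ hN]; exists N => n Nn; exact: hN.
Qed.

Lemma closed_seq (T : topologicalType) (P : set T) (u : nat -> T) (l : T) :
  closed P -> (forall n, P (u n)) -> u @ \oo --> l -> P l.
Proof.
move=> cP Pu ul; apply: cP => B hB; have [N _ hN] := ul _ hB.
by exists (u N); split=> //; apply: hN => /=.
Qed.

Lemma dense_ball (T : topologicalType) (d : T -> T -> R) (D : set T) :
  complete_compatible_metric d -> dense D -> forall x e, 0 < e ->
  exists z, D z /\ d x z < e.
Proof.
move=> hd dD x e e0; have oB := ball_open hd x e.
have nB : [set y | d x y < e] !=set0.
  exists x; case: hd => [[_ dxx] _ _ _ _] /=; by rewrite (dxx x x).2.
have [z [hz Dz]] := dD _ nB oB; by exists z.
Qed.

Lemma d_pos (T : topologicalType) (d : T -> T -> R) :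
  complete_compatible_metric d -> forall x y, x <> y -> 0 < d x y.
Proof.
move=> [[d0 dxx] _ _ _ _] x y ne; rewrite lt_neqAle d0 andbT eq_sym.
by apply/eqP => /dxx.
Qed.

Definition bits (S : set (nat * nat)) : nat -> bool :=
  fun n => match @unpickle (prod nat nat) n with Some p => `[< S p >] | None => false end.

Lemma bits_inj : injective bits.
Proof.
move=> S S' e; apply/funext => p; have := congr1 (fun f => f (pickle p)) e.
rewrite /bits pickleK => e'; rewrite propeqE; split=> h.
  by move: e'; rewrite asboolT // => /esym/asboolP.
by move: e'; rewrite (asboolT h) => /asboolP.
Qed.

Lemma trilemma (a t b c : R) : t < a / 2 -> b < t -> c < t -> a <= b + c -> False.
Proof. lra. Qed.

Lemma polish_code (T : topologicalType) (d : T -> T -> R) (D : set T) (g : T -> nat) :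
  complete_compatible_metric d -> dense D -> {in D &, injective g} ->
  injective (fun x : T => [set nk : nat * nat | exists z, D z /\ g z = nk.1 /\
       d x z < (nk.2.+1%:R)^-1]).
Proof.
move=> hd dD gi x x' e; apply: contrapT => ne.
have dp := d_pos hd ne.
case: (hd) => [[d0 dxx] dsym dtri _ _].
have h2 : 0 < d x x' / 2 by rewrite divr_gt0.
have [k hk] := archB h2.
have kp : 0 < (k.+1%:R : R)^-1 by rewrite invr_gt0 ltr0n.
have [z [Dz hz]] := dense_ball hd dD x kp.
have : [set nk : nat * nat | exists z, D z /\ g z = nk.1 /\
       d x z < (nk.2.+1%:R)^-1] (g z, k) by exists z.
rewrite e => -[z' [Dz' [gz hz']]].
have zz : z' = z by apply: gi => //; exact: mem_set.
subst z'; have hz2 : d x' z < (k.+1%:R)^-1 by exact: hz'.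
have := dtri x z x'; rewrite (dsym z x'); exact: trilemma hk hz hz2.
Qed.

Lemma polish_inj (T : topologicalType) : polish_space T ->
  exists c : T -> R, injective c.
Proof.
move=> [[D [cD dD]] [d hd]].
have [g gi] : exists g : T -> nat, {in D &, injective g} by apply/pcard_injP.
exists (enc \o bits \o (fun x : T => [set nk : nat * nat | exists z, D z /\ g z = nk.1 /\
       d x z < (nk.2.+1%:R)^-1])).
move=> x y /enc_inj /bits_inj; exact: polish_code hd dD gi x y.
Qed.

Lemma tri2 (a t b c e : R) : t < e / 2 -> b < t -> c < t -> a <= b + c -> a < e.
Proof. lra. Qed.

Lemma closed_code_sub (T : topologicalType) (d : T -> T -> R) (D : set T) (g : T -> nat)
  (C C' : set T) :
  complete_compatible_metric d -> dense D -> {in D &, injective g} -> closed C' ->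
  [set nk : nat * nat | exists z, D z /\ g z = nk.1 /\
     forall y, d z y < (nk.2.+1%:R)^-1 -> ~ C y] =
  [set nk : nat * nat | exists z, D z /\ g z = nk.1 /\
     forall y, d z y < (nk.2.+1%:R)^-1 -> ~ C' y] -> C `<=` C'.
Proof.
move=> hd dD gi cC' e x Cx; apply: contrapT => nx.
case: (hd) => [[d0 dxx] dsym dtri dopen _].
have [ee e0 hb] := (dopen _).1 (closed_openC cC') x nx.
have h2 : 0 < ee / 2 by rewrite divr_gt0.
have [k hk] := archB h2.
have kp : 0 < (k.+1%:R : R)^-1 by rewrite invr_gt0 ltr0n.
have [z [Dz hz]] := dense_ball hd dD x kp.
have : [set nk : nat * nat | exists z, D z /\ g z = nk.1 /\
     forall y, d z y < (nk.2.+1%:R)^-1 -> ~ C' y] (g z, k).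
  exists z; split=> //; split=> // y hy; apply: hb => /=.
  exact: tri2 hk hz hy (dtri x z y).
rewrite -e => -[z' [Dz' [gz hz']]].
have zz : z' = z by apply: gi => //; exact: mem_set.
subst z'; apply: (hz' x) => //; rewrite dsym; exact: hz.
Qed.

Lemma polish_closed_inj (T : topologicalType) : polish_space T ->
  exists c : set T -> R, forall C C', closed C -> closed C' -> c C = c C' -> C = C'.
Proof.
move=> [[D [cD dD]] [d hd]].
have [g gi] : exists g : T -> nat, {in D &, injective g} by apply/pcard_injP.
exists (fun C => enc (bits [set nk : nat * nat | exists z, D z /\ g z = nk.1 /\
     forall y, d z y < (nk.2.+1%:R)^-1 -> ~ C y])).
move=> C C' cC cC' /enc_inj /bits_inj e; apply/seteqP; split.
  exact: closed_code_sub hd dD gi cC' e.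
exact: closed_code_sub hd dD gi cC (esym e).
Qed.
Local Open Scope ring_scope.
Definition cstep (T : Type) (d : T -> T -> R) (nxt : T * R -> T) (bit : bool) (cr : T * R) : T * R :=
  ((if bit then nxt cr else cr.1), Num.min (cr.2 / 2) (d cr.1 (nxt cr) / 5)).

Fixpoint cpt (T : Type) (d : T -> T -> R) (nxt : T * R -> T) (p0 : T) (b : nat -> bool) (n : nat) : T * R :=
  match n with 0%N => (p0, 1) | n'.+1 => cstep d nxt (b n') (cpt d nxt p0 b n') end.

Lemma cptS (T : Type) (d : T -> T -> R) nxt p0 b n :
  cpt d nxt p0 b n.+1 = cstep d nxt (b n) (cpt d nxt p0 b n).
Proof. by []. Qed.

Lemma le_eps (a b : R) : (forall e, 0 < e -> a <= b + e) -> a <= b.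
Proof.
move=> h; rewrite leNgt; apply/negP => ba.
have := h ((a - b) / 2) ltac:(by rewrite divr_gt0 // subr_gt0); lra.
Qed.

Lemma rb_step (a r r' : R) : 0 <= a -> 0 < r -> 0 < r' -> r' <= r/2 -> (a+1)*r <= 1 -> (a+1+1)*r' <= 1.
Proof. move=> *; nra. Qed.

Lemma rlt_help (a r e : R) : 0 <= a -> 0 < r -> (a+1)*r <= 1 -> 1 < (a+1)*(e/2) -> r < e/2.
Proof. move=> *; nra. Qed.

Lemma tri3 (a b c r e : R) : a <= b + c -> b <= r -> c <= r -> r < e/2 -> a < e.
Proof. lra. Qed.

Lemma tri4 (a b c r e : R) : a <= b + c -> b <= r -> c < e -> a <= r + e.
Proof. lra. Qed.

Lemma tri5 (a b c r : R) : 0 < a -> a <= b + c -> b <= r -> c <= r -> r <= a / 5 -> False.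
Proof. lra. Qed.

Lemma perfect_cantor (T : topologicalType) (d : T -> T -> R) (P : set T) :
  complete_compatible_metric d -> perfect_set P -> P !=set0 ->
  exists h : (nat -> bool) -> T, injective h /\ forall b, P (h b).
Proof.
move=> hd [cP limP] [p0 Pp0].
case: (hd) => [[d0 dxx] dsym dtri dopen dcomp].
have hq : forall cr : T * R, exists q : T, P cr.1 -> 0 < cr.2 ->
    P q /\ 0 < d cr.1 q /\ d cr.1 q < cr.2 / 2.
  move=> [c r] /=; have [[Pc r0]|] := pselect (P c /\ 0 < r); last first.
    by move=> h; exists c => Pc r0; case: h.
  have : limit_point P c by rewrite limP.
  have r2 : 0 < r / 2 by rewrite divr_gt0.
  move=> /(_ _ (dnbhs_ball hd c r2)) [y [yc Py hy]]; exists y => _ _.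
  split=> //; split=> //; apply: d_pos => // yc'; by rewrite yc' eqxx in yc.
have [nxt hnxt] := choice hq.
pose pt := cpt d nxt p0.
have stepP c r bit : P c -> 0 < r ->
    [/\ P (cstep d nxt bit (c, r)).1, 0 < (cstep d nxt bit (c, r)).2,
        (cstep d nxt bit (c, r)).2 <= r / 2 &
        d c (cstep d nxt bit (c, r)).1 <= r / 2].
  move=> Pc r0; have [Pq [dq0 dq]] := hnxt (c, r) Pc r0.
  rewrite /cstep /=; split.
  - by case: bit.
  - by rewrite lt_min !divr_gt0.
  - by rewrite ge_min lexx.
  - case: bit; first exact: ltW.
    by rewrite (dxx c c).2 // divr_ge0 // ltW.
have inv b n : P (pt b n).1 /\ 0 < (pt b n).2.
  elim: n => [|n [IH1 IH2]]; first by split=> //=; rewrite ltr01.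
  rewrite /pt cptS -/(pt b n); case: (pt b n) IH1 IH2 => c r /= Pc r0.
  by have [] := stepP c r (b n) Pc r0.
have rdec b n : (pt b n.+1).2 <= (pt b n).2 / 2.
  have [Pc r0] := inv b n; rewrite /pt cptS -/(pt b n).
  by case: (pt b n) Pc r0 => c r /= Pc r0; have [] := stepP c r (b n) Pc r0.
have dstep b n : d (pt b n).1 (pt b n.+1).1 <= (pt b n).2 / 2.
  have [Pc r0] := inv b n; rewrite /pt cptS -/(pt b n).
  by case: (pt b n) Pc r0 => c r /= Pc r0; have [] := stepP c r (b n) Pc r0.
have dk b n k : d (pt b n).1 (pt b (addn n k)).1 <= (pt b n).2 - (pt b (addn n k)).2.
  elim: k => [|k IH]; first by rewrite addn0 (dxx _ _).2 // subrr.
  rewrite addnS; have := dtri (pt b n).1 (pt b (addn n k)).1 (pt b (addn n k).+1).1.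
  have := dstep b (addn n k); have := rdec b (addn n k); lra.
have rbound b n : (n%:R + 1) * (pt b n).2 <= 1.
  elim: n => [|n IH]; first by rewrite add0r mul1r.
  rewrite -natr1; apply: rb_step (rdec b n) IH => //.
  - exact: (inv b n).2.
  - exact: (inv b n.+1).2.
have dle b n m : leq n m -> d (pt b n).1 (pt b m).1 <= (pt b n).2.
  move=> nm; have := dk b n (subn m n); rewrite subnKC //.
  have := (inv b m).2; lra.
have cauchy b : forall e, 0 < e -> exists N, forall m n, leq N m -> leq N n ->
    d (pt b m).1 (pt b n).1 < e.
  move=> e e0; have e2 : 0 < e / 2 by rewrite divr_gt0.
  have [N hN] := archA e2; exists N => m n Nm Nn.
  have rN : (pt b N).2 < e / 2.
    apply: rlt_help (rbound b N) _ => //; [exact: (inv b N).2 | by rewrite natr1].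
  apply: tri3 (dtri _ (pt b N).1 _) _ _ rN.
    by rewrite dsym; exact: dle.
  exact: dle.
have hl : forall b : nat -> bool, exists l : T, (fun n => (pt b n).1) @ \oo --> l.
  by move=> b; apply: (dcomp (fun n => (pt b n).1)); exact: cauchy.
have [h hh] := choice hl.
have Ph b : P (h b) by apply: closed_seq cP _ (hh b) => n; exact: (inv b n).1.
have close b n : d (pt b n).1 (h b) <= (pt b n).2.
  apply: le_eps => e e0; have [N hN] := cvg_ball hd (hh b) e0.
  apply: tri4 (dtri _ (pt b (maxn n N)).1 _) _ _.
    by apply: dle; rewrite leq_maxl.
  by rewrite dsym; apply: hN; rewrite leq_maxr.
have pre (b b' : nat -> bool) m : (forall k, ltn k m -> b k = b' k) -> pt b m = pt b' m.
  elim: m => [//|m IH] hb; rewrite /pt !cptS -!/(pt _ m) IH.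
    by rewrite (hb m (ltnSn m)).
  by move=> k km; apply: hb; exact: ltnW.
have core (b b' : nat -> bool) m : b m = false -> b' m = true ->
    (forall k, ltn k m -> b k = b' k) -> h b <> h b'.
  move=> bm bm' hpre e.
  have [Pc r0] := inv b m.
  have [Pq [dq0 dq]] := hnxt (pt b m) Pc r0.
  have c1 := close b m.+1; have c2 := close b' m.+1.
  rewrite /pt cptS -/(pt b m) bm in c1.
  rewrite /pt cptS -/(pt b' m) bm' -(pre b b' m hpre) in c2.
  rewrite /cstep /= in c1 c2.
  apply: (tri5 dq0 (dtri _ (h b) _) c1); first by rewrite e dsym; exact: c2.
  by rewrite ge_min lexx orbT.
exists h; split=> // b b' e; apply/funext => n; apply: contrapT => ne.
have ex : exists n, b n != b' n by exists n; apply/eqP.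
case: (ex_minnP ex) => m bm mmin.
have hpre : forall k, ltn k m -> b k = b' k.
  move=> k km; apply/eqP; apply: contraTT km => /mmin; by rewrite leqNgt.
move: bm; case eb : (b m); case eb' : (b' m) => // _.
- by case: (core b' b m eb' eb (fun k h => esym (hpre k h))).
- by case: (core b b' m eb eb' hpre).
Qed.
Local Open Scope ring_scope.

Definition ilv (a b : nat -> bool) (n : nat) : bool := if odd n then b n./2 else a n./2.

Lemma ilv_inj a b a' b' : ilv a b = ilv a' b' -> a = a' /\ b = b'.
Proof.
move=> e; split; apply/funext => n.
  by have := congr1 (fun g => g n.*2) e; rewrite /ilv odd_double doubleK.
have := congr1 (fun g => g n.*2.+1) e; rewrite /ilv /= odd_double /=.
by rewrite uphalf_double.
Qed.

Lemma small_set0 T : small (@set0 T).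
Proof.
split; first exact: card_ge0.
rewrite card_le0 => /eqP e; have := congr1 (fun A : set R => A 0) e.
by rewrite /= => <-.
Qed.

Lemma small_bool : small [set: bool].
Proof.
split.
  apply: (@inj_le _ _ _ _ (fun b : bool => if b then 1 else 0 : R)) => //.
  by move=> [] [] _ _ //= /eqP; rewrite ?oner_eq0 // eq_sym oner_eq0.
move=> Rb; have : finite_set [set: R] by apply: card_le_finite Rb _; exact: finite_finset.
apply/infiniteP; apply: (@inj_le _ _ _ _ (fun n : nat => n%:R : R)) => //.
by move=> m n _ _ /eqP; rewrite eqr_nat => /eqP.
Qed.

Lemma small_setU T (chi : T -> R) (A B : set T) : continuum_regular -> injective chi ->
  small A -> small B -> small (A `|` B).
Proof.
move=> reg ci sA sB.
have -> : A `|` B = \bigcup_(b : bool) (if b then A else B).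
  apply/seteqP; split=> x.
    by case=> h; [exists true|exists false].
  by move=> [[]] _ h; [left|right].
by apply: small_bigcup reg ci small_bool _ => -[].
Qed.

Lemma small_set1 T (x : T) : small [set x].
Proof.
apply: small_le small_bool; apply: (@inj_le _ _ _ _ (fun _ => true)) => //.
by move=> a b; rewrite !inE => -> ->.
Qed.

Definition choose_opt {T} (P : T -> Prop) : option T :=
  match pselect (exists x, P x) with left h => Some (sval (cid h)) | right _ => None end.

Lemma choose_optP T (P : T -> Prop) x : choose_opt P = Some x -> P x.
Proof.
rewrite /choose_opt; case: pselect => // h [<-]; exact: (svalP (cid h)).
Qed.

Lemma choose_opt_ex T (P : T -> Prop) : (exists x, P x) -> exists2 x, choose_opt P = Some x & P x.
Proof.
move=> h; rewrite /choose_opt; case: pselect => // h'.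
by exists (sval (cid h')) => //; exact: (svalP (cid h')).
Qed.


Definition Xprev (X : Type) (lt : R -> R -> Prop) (xi : R)
  (prev : forall eta, lt eta xi -> option (X * set X)) : set X :=
  [set x | exists eta (h : lt eta xi) B, prev eta h = Some (x, B)].

Definition Fprev (X : Type) (lt : R -> R -> Prop) (xi : R)
  (prev : forall eta, lt eta xi -> option (X * set X)) : set X :=
  [set x | exists eta (h : lt eta xi) x' B, prev eta h = Some (x', B) /\ B x].

Definition mstep (I X : Type) (Y : I -> Type) (f : forall i, X -> Y i)
  (lt : R -> R -> Prop) (valid : {i : I & set (Y i)} -> Prop)
  (iota : {i : I & set (Y i)} -> R) (xi : R)
  (prev : forall eta, lt eta xi -> option (X * set X)) : option (X * set X) :=
  match choose_opt (fun k => valid k /\ iota k = xi) with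
  | None => None
  | Some k =>
    match choose_opt (fun x => projT2 k (f (projT1 k) x) /\ ~ Fprev prev x) with
    | None => None
    | Some x =>
      match choose_opt (fun y => projT2 k y /\ ~ (f (projT1 k) @` (x |` Xprev prev)) y) with
      | None => None
      | Some y => Some (x, f (projT1 k) @^-1` [set y])
      end
    end
  end.

Lemma mstep_some I X Y f lt valid iota xi prev x B :
  @mstep I X Y f lt valid iota xi prev = Some (x, B) ->
  ~ Fprev prev x /\ exists i (y : Y i), B = f i @^-1` [set y].
Proof.
rewrite /mstep; case e1 : (choose_opt _) => [k|//].
case e2 : (choose_opt _) => [x0|//]; case e3 : (choose_opt _) => [y|//] [<- <-].
split; first by have [] := choose_optP e2.
by exists (projT1 k), y.
Qed.

Lemma mstep_spec I X Y f lt valid iota xi prev (i : I) (P : set (Y i)) :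
  valid (existT _ i P) -> iota (existT _ i P) = xi ->
  (forall k, valid k -> iota k = xi -> k = existT _ i P) ->
  (exists x, P (f i x) /\ ~ Fprev prev x) ->
  (forall x, exists y, P y /\ ~ (f i @` (x |` Xprev prev)) y) ->
  exists x y, [/\ @mstep I X Y f lt valid iota xi prev = Some (x, f i @^-1` [set y]),
     P (f i x), P y & ~ (f i @` (x |` Xprev prev)) y].
Proof.
move=> vk ik uk ex1 ex2; rewrite /mstep.
have [k e1 [vk' ik']] := choose_opt_ex (ex_intro (fun k => valid k /\ iota k = xi) _ (conj vk ik)).
rewrite e1; have ek := uk k vk' ik'; subst k => /=.
have [x e2 [Px nFx]] := choose_opt_ex ex1; rewrite e2.
have [y e3 [Py ny]] := choose_opt_ex (ex2 x); rewrite e3.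
by exists x, y.
Qed.
Local Close Scope ring_scope.

Theorem mainTheorem1
  (I : Type) (X : topologicalType) (Y : I -> topologicalType)
  (f : forall i : I, X -> Y i) :
  continuum_regular ->
  ([set: I] #= continuum)%card ->
  polish_space X ->
  (forall i, polish_space (Y i)) ->
  (forall i, f i @` [set: X] = [set: Y i]) ->
  (forall i (y : Y i), card_lt (f i @^-1` [set y]) continuum) ->
  exists A : set X, forall i, bernstein_set (f i @` A).
Proof.
move=> reg hI hX hY hsurj hfib.
have [lt [wf tot seg]] := good_order.
have [chi chii] := polish_inj hX.
have [phi phii] : exists phi : I -> R, injective phi.
  have : ([set: I] #<= [set: R])%card by move: hI; rewrite card_eq_le => /andP[].
  move=> /pcard_injP [phi hphi]; exists phi => a b e.
  by apply: hphi => //; exact: mem_set.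
pose ccode i := sval (cid (polish_closed_inj (hY i))).
have ccodeP i : forall C C', closed C -> closed C' -> ccode i C = ccode i C' -> C = C'.
  exact: (svalP (cid (polish_closed_inj (hY i)))).
pose K := {i : I & set (Y i)}.
pose valid (k : K) := perfect_set (projT2 k) /\ projT2 k !=set0.
pose iota (k : K) := enc (ilv (dec (phi (projT1 k))) (dec (ccode (projT1 k) (projT2 k)))).
have iotaU : forall k k', valid k -> valid k' -> iota k = iota k' -> k = k'.
  move=> [i P] [i' P'] [[cP _] _] [[cP' _] _] /enc_inj /ilv_inj [/dec_inj/phii ii'].
  rewrite /= in ii' cP cP' *; subst i' => /dec_inj /ccodeP e; by rewrite (e cP cP').
have notsmallP : forall i (P : set (Y i)), valid (existT _ i P) -> ~ small P.
  move=> i P [perP neP]; apply: notsmall.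
  have [_ [d hd]] := hY i.
  have [h [hi hP]] := perfect_cantor hd perP neP.
  apply: (@inj_le _ _ _ _ (h \o dec)).
    by move=> a b _ _ /hi /dec_inj.
  by move=> _ [a _ <-]; exact: hP.
have pick : forall i (P S : set (Y i)), valid (existT _ i P) -> small S ->
    exists y, P y /\ ~ S y.
  move=> i P S vk sS; apply: contrapT => hn; apply: (notsmallP i P vk).
  apply: small_sub sS => p Pp; apply: contrapT => np; apply: hn; by exists p.
pose F := @mstep I X (fun i => Y i) f lt valid iota.
pose out := Fix wf (fun _ => option (X * set X)) F.
have outE xi : out xi = F xi (fun eta _ => out eta).
  rewrite /out Fix_eq // => x g1 g2 h; congr (F x _).
  apply: functional_extensionality_dep => y.
  apply: functional_extensionality_dep => p; exact: h.
have outB eta x B : out eta = Some (x, B) ->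
    ~ Fprev (fun e (_ : lt e eta) => out e) x /\ exists i (y : Y i), B = f i @^-1` [set y].
  move=> e; apply: (@mstep_some I X (fun i => Y i) f lt valid iota eta (fun e _ => out e)).
  by have := esym (outE eta); rewrite e.
have smallJ xi : small [set: {e | lt e xi}].
  apply: small_le (seg xi); apply: (@inj_le _ _ _ _ sval).
    move=> [a ha] [b hb] _ _ /= e; subst b; congr exist; exact: Prop_irrelevance.
  by move=> _ [j _ <-]; exact: (svalP j).
have stage i P : valid (existT _ i P) ->
    exists x y, [/\ out (iota (existT _ i P)) = Some (x, f i @^-1` [set y]), P (f i x), P y &
      ~ (f i @` (x |` Xprev (fun e (_ : lt e (iota (existT _ i P))) => out e))) y].
  move=> vk; set xi := iota _; rewrite outE /F.
  apply: (@mstep_spec I X (fun i => Y i) f lt valid iota xi (fun e _ => out e) i P) => //.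
  - by move=> k vk' ik; apply: iotaU.
  - set Fp := Fprev _.
    have sFp : small Fp.
      pose G (j : {e | lt e xi}) := match out (sval j) with Some (_, B) => B | None => set0 end.
      apply: (@small_sub _ _ (\bigcup_j G j)).
        move=> x [e [h [x' [B [eo Bx]]]]]; exists (exist _ e h) => //.
        by rewrite /G /= eo.
      apply: small_bigcup reg chii (smallJ xi) _ => j; rewrite /G.
      case e : (out (sval j)) => [[x' B]|]; last exact: small_set0.
      by have [_ [i' [y ->]]] := outB _ _ _ e; exact: hfib.
    have [p [Pp np]] := pick i P _ vk (small_image (f i) sFp).
    have : [set: Y i] p by [].
    rewrite -(hsurj i) => -[x _ fx]; exists x; split; first by rewrite fx.
    by move=> Fx; apply: np; exists x.
  - move=> x; apply: pick => //; apply: small_image.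
    apply: small_setU reg chii (small_set1 x) _.
    pose g (j : {e | lt e xi}) := match out (sval j) with Some (x', _) => x' | None => x end.
    apply: (@small_sub _ _ (g @` [set: {e | lt e xi}])); last first.
      exact: small_image (smallJ xi).
    move=> x' [e [h [B eo]]]; exists (exist _ e h) => //.
    by rewrite /g /= eo.
exists [set x | exists eta B, out eta = Some (x, B)].
move=> i P perP neP; have vk : valid (existT _ i P) := conj perP neP.
have [x [y [ox Px Py ny]]] := stage i P vk.
split.
  exists (f i x); split => //; exists x => //.
  by exists (iota (existT _ i P)), (f i @^-1` [set y]).
exists y; split => //; move=> [x' [eta [B oe]] fx'].
have [lt1|[eq1|lt2]] := tot eta (iota (existT _ i P)).
- apply: ny; exists x' => //; right; by exists eta, lt1, B.
- subst eta; rewrite ox in oe; case: oe => ex _; subst x'.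
  by apply: ny; exists x => //; left.
- have [nF _] := outB _ _ _ oe; apply: nF.
  by exists (iota (existT _ i P)), lt2, x, (f i @^-1` [set y]); split.
Qed.
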